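(* Let $G_l$ be a graph of order $n_l$, maximum degree $\Delta_l$ and minimum degree $\delta_l$, $l\in\{1,2\}$. Then: (i) For $i,j\in\{1,2\}$ with $i\neq j$ and every integer $k\in\{\Delta_j-\Delta_i,\dots,\Delta_i+\Delta_j\}$, $\phi_k^d(G_1\times G_2)\ge n_j\,\phi_{k-\Delta_j}^d(G_i)$. (ii) For all integers $k_1\in\{1-\delta_1,\dots,\Delta_1\}$ and $k_2\in\{1-\delta_2,\dots,\Delta_2\}$, $$\phi_{k_1+k_2-1}^d(G_1\times G_2)\ge \phi_{k_1}^d(G_1)\phi_{k_2}^d(G_2)+\min\{n_1-\phi_{k_1}^d(G_1),\,n_2-\phi_{k_2}^d(G_2)\}.$$
   Context: All graphs are finite and simple. For a graph $G=(V,E)$, a set $S\subseteq V$ and $v\in V$, let $\delta_S(v)=|\{u\in S: uv\in E\}|$, $\delta(v)$ the degree of $v$, and $\overline{S}=V\setminus S$. For an integer $k$, a non-empty set $S\subseteq V$ is a defensive $k$-alliance if $\delta_S(v)\ge \delta_{\overline S}(v)+k$ for every $v\in S$. A set $X\subseteq V$ is a defensive $k$-alliance free set ($k$-daf set) if no defensive $k$-alliance $S$ satisfies $S\subseteq X$. $\phi_k^d(G)$ denotes the maximum cardinality of a $k$-daf set in $G$. The Cartesian product $G_1\times G_2$ of $G_1=(V_1,E_1)$, $G_2=(V_2,E_2)$ has vertex set $V_1\times V_2$, with $(a,b)$ adjacent to $(c,d)$ iff either $a=c$ and $bd\in E_2$, or $b=d$ and $ac\in E_1$. *)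

(* Defs.v *)
(* Simple graphs = symmetric irreflexive relations on a finType. *)
From HB Require Import structures.
From mathcomp Require Import all_boot all_order all_algebra.
Set Implicit Arguments. Unset Strict Implicit. Unset Printing Implicit Defensive.
Import Order.TTheory GRing.Theory Num.Theory.

Section GraphDefs.
Variable T : finType.
Variable e : rel T.

Definition deg_in (S : {set T}) (v : T) : nat := #|[set u in S | e v u]|.

Definition deg (v : T) : nat := #|[set u | e v u]|.

Definition maxdeg : nat := \max_(v : T) deg v.

(* minimum degree (the seed #|T| is never attained by a degree in a nonempty
   simple graph, so this is the true minimum; for the empty graph it is 0) *)
Definition mindeg : nat := \big[minn/#|T|]_(v : T) deg v.

Definition def_alliance (k : int) (S : {set T}) : bool :=
  (S != set0) &&
  [forall v in S, ((deg_in S v)%:Z >= (deg_in (~: S) v)%:Z + k)%R].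

Definition daf (k : int) (X : {set T}) : bool :=
  [forall S : {set T}, (S \subset X) ==> ~~ def_alliance k S].

(* phi_k^d(G): maximum cardinality of a k-daf set (set0 is always k-daf) *)
Definition phi_d (k : int) : nat := \max_(X : {set T} | daf k X) #|X|.

End GraphDefs.

Definition cart (T1 T2 : finType) (e1 : rel T1) (e2 : rel T2) : rel (T1 * T2)%type :=
  fun x y => ((x.1 == y.1) && e2 x.2 y.2) || ((x.2 == y.2) && e1 x.1 y.1).

(* Main.v *)
Require Import Defs.
From HB Require Import structures.
From mathcomp Require Import all_boot all_order all_algebra.
From mathcomp Require Import zify.
Import Order.TTheory GRing.Theory Num.Theory.
Set Implicit Arguments. Unset Strict Implicit. Unset Printing Implicit Defensive.

Section Aux.
Variables (T : finType) (e : rel T).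

Lemma deg_inC S v : deg_in e S v + deg_in e (~: S) v = deg e v.
Proof.
rewrite /deg_in /deg -(cardsID S [set u | e v u]).
by congr (_ + _); apply: eq_card => u; rewrite !inE andbC.
Qed.

Lemma deg_in_mono (S1 S2 : {set T}) v : S1 \subset S2 -> deg_in e S1 v <= deg_in e S2 v.
Proof.
move=> sub; apply: subset_leq_card; apply/subsetP=> u.
by rewrite !inE => /andP[/(subsetP sub) -> ->].
Qed.

Lemma daf0 k : daf e k set0.
Proof.
apply/forallP=> S; apply/implyP; rewrite subset0 => /eqP ->.
by rewrite /def_alliance eqxx.
Qed.

Lemma phi_witness k : exists2 X, daf e k X & #|X| = phi_d e k.
Proof.
have H : 0 < #|daf e k| by apply/card_gt0P; exists set0; exact: daf0.
have [X HX E] := eq_bigmax_cond (fun X : {set T} => #|X|) H.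
by exists X => //; rewrite /phi_d E.
Qed.

Lemma phi_ge k X : daf e k X -> #|X| <= phi_d e k.
Proof. by move=> H; rewrite /phi_d; apply: (leq_bigmax_cond (F := fun X : {set T} => #|X|)). Qed.

Lemma deg_le_max v : deg e v <= maxdeg e.
Proof. exact: (leq_bigmax (F := fun v => deg e v)). Qed.

Lemma mindeg_le v : mindeg e <= deg e v.
Proof.
rewrite /mindeg; have : v \in index_enum T by rewrite mem_index_enum.
elim: (index_enum T) => [|x s IH] //; rewrite inE big_cons => /orP[/eqP<-|/IH H].
  exact: geq_minl.
exact: leq_trans (geq_minr _ _) H.
Qed.
End Aux.

Section Prod.
Variables (T1 T2 : finType) (e1 : rel T1) (e2 : rel T2).
Hypotheses (irr1 : irreflexive e1) (irr2 : irreflexive e2).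
Definition prow (S : {set T1 * T2}) b := [set x | (x, b) \in S].
Definition pcol (S : {set T1 * T2}) a := [set y | (a, y) \in S].

Lemma prowC S b : prow (~: S) b = ~: prow S b.
Proof. by apply/setP=> x; rewrite !inE. Qed.
Lemma pcolC S a : pcol (~: S) a = ~: pcol S a.
Proof. by apply/setP=> x; rewrite !inE. Qed.

Lemma deg_in_cart S a b :
  deg_in (cart e1 e2) S (a, b) = deg_in e1 (prow S b) a + deg_in e2 (pcol S a) b.
Proof.
rewrite /deg_in -(cardsID [set u : T1 * T2 | u.2 == b]).
congr (_ + _).
- rewrite -(card_imset [set u in prow S b | e1 a u] (f := fun x => (x, b))); last by move=> x y [].
  apply: eq_card => -[x y]; rewrite !inE /cart /=.
  apply/idP/imsetP.
  + case/andP => /andP[Hs He] /eqP Hy; subst y; exists x => //.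
    rewrite !inE Hs /=; move: He; rewrite irr2 andbF eqxx /=.
    done.
  + case=> x' ; rewrite !inE => /andP[Hs He] [-> ->].
    by rewrite Hs eqxx He orbT.
- rewrite -(card_imset [set u in pcol S a | e2 b u] (f := fun y => (a, y))); last by move=> x y [].
  apply: eq_card => -[x y]; rewrite !inE /cart /=.
  apply/idP/imsetP.
  + case/andP => /negP Hy /andP[Hs He].
    case/orP: He => /andP[/eqP Hx He]; last by case: Hy; apply/eqP.
    subst x; exists y => //; by rewrite !inE Hs.
  + case=> y' ; rewrite !inE => /andP[Hs He] [-> ->].
    rewrite Hs eqxx He /=; apply/andP; split=> //.
    by apply/negP => /eqP E; move: He; rewrite E irr2.
Qed.
End Prod.

Section P1.
Variables (T1 T2 : finType) (e1 : rel T1) (e2 : rel T2).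
Hypotheses (irr1 : irreflexive e1) (irr2 : irreflexive e2).

Lemma part_i_row (k : int) :
  #|T2| * phi_d e1 (k - (maxdeg e2)%:Z)%R <= phi_d (cart e1 e2) k.
Proof.
have [X HX <-] := phi_witness e1 (k - (maxdeg e2)%:Z)%R.
rewrite mulnC -cardsT -cardsX; apply: phi_ge.
apply/forallP => S; apply/implyP => sub; apply/negP => /andP[ne /forallP all].
case/set0Pn: ne => -[a0 b0] Hu.
have Hsub : prow S b0 \subset X.
  by apply/subsetP => x; rewrite inE => /(subsetP sub); rewrite in_setX => /andP[].
move/forallP: HX => /(_ (prow S b0)); rewrite Hsub /= => /negP; apply; apply/andP; split.
  by apply/set0Pn; exists a0; rewrite inE.
apply/forallP => a; apply/implyP; rewrite inE => Ha.
have := all (a, b0); rewrite Ha /= !deg_in_cart // prowC pcolC.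
have H1 := deg_inC e2 (pcol S a) b0. have H2 := deg_le_max e2 b0.
lia.
Qed.

Lemma part_i_col (k : int) :
  #|T1| * phi_d e2 (k - (maxdeg e1)%:Z)%R <= phi_d (cart e1 e2) k.
Proof.
have [X HX <-] := phi_witness e2 (k - (maxdeg e1)%:Z)%R.
rewrite -cardsT -cardsX; apply: phi_ge.
apply/forallP => S; apply/implyP => sub; apply/negP => /andP[ne /forallP all].
case/set0Pn: ne => -[a0 b0] Hu.
have Hsub : pcol S a0 \subset X.
  by apply/subsetP => x; rewrite inE => /(subsetP sub); rewrite in_setX => /andP[].
move/forallP: HX => /(_ (pcol S a0)); rewrite Hsub /= => /negP; apply; apply/andP; split.
  by apply/set0Pn; exists b0; rewrite inE.
apply/forallP => b; apply/implyP; rewrite inE => Hb.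
have := all (a0, b); rewrite Hb /= !deg_in_cart // prowC pcolC.
have H1 := deg_inC e1 (prow S b) a0. have H2 := deg_le_max e1 a0.
lia.
Qed.
End P1.

Section P2.
Variables (T1 T2 : finType) (e1 : rel T1) (e2 : rel T2).
Hypotheses (irr1 : irreflexive e1) (irr2 : irreflexive e2).

Lemma part_ii (k1 k2 : int) :
  (1 - (mindeg e1)%:Z <= k1)%R -> (1 - (mindeg e2)%:Z <= k2)%R ->
  phi_d e1 k1 * phi_d e2 k2
       + minn (#|T1| - phi_d e1 k1) (#|T2| - phi_d e2 k2)
     <= phi_d (cart e1 e2) (k1 + k2 - 1)%R.
Proof.
move=> hk1 hk2.
have [X1 HX1 <-] := phi_witness e1 k1.
have [X2 HX2 <-] := phi_witness e2 k2.
set m := minn _ _.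
set s1 := take m (enum (~: X1)). set s2 := take m (enum (~: X2)).
have Hc1 : #|T1| - #|X1| = size (enum (~:X1)) by rewrite -cardE -(cardsC X1) addKn.
have Hc2 : #|T2| - #|X2| = size (enum (~:X2)) by rewrite -cardE -(cardsC X2) addKn.
have sz1 : size s1 = m by rewrite size_takel // -Hc1 geq_minl.
have sz2 : size s2 = m by rewrite size_takel // -Hc2 geq_minr.
have u1 : uniq s1 := take_uniq _ (enum_uniq _).
have u2 : uniq s2 := take_uniq _ (enum_uniq _).
set D := [set u | u \in zip s1 s2].
have HD : #|D| = m.
  by rewrite cardsE (card_uniqP _) ?size_zip ?sz1 ?sz2 ?minnn // zip_uniql.
have Dmem x y : (x, y) \in D -> (x \in ~: X1) && (y \in ~: X2).
  rewrite inE => /(nthP (x, y)) [i lt]; rewrite nth_zip ?sz1 ?sz2 // => -[<- <-].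
  rewrite size_zip sz1 sz2 minnn in lt.
  have h1 := mem_nth x (_ : i < size s1). have h2 := mem_nth y (_ : i < size s2).
  rewrite sz1 sz2 in h1 h2.
  by move: (h1 lt) (h2 lt) => /mem_take + /mem_take; rewrite !mem_enum => -> ->.
have Dfun1 a b b' : (a, b) \in D -> (a, b') \in D -> b = b'.
  rewrite !inE => /(nthP (a, b)) [i lti Ei] /(nthP (a, b)) [j ltj Ej].
  move: Ei Ej; rewrite !nth_zip ?sz1 ?sz2 // => -[Ea Eb] [Ea' Eb'].
  rewrite size_zip sz1 sz2 minnn in lti ltj.
  have : i == j by rewrite -(nth_uniq a (s:=s1)) ?sz1 // Ea Ea'.
  by move/eqP => Eij; rewrite -Eb -Eb' Eij.
have Dfun2 a a' b : (a, b) \in D -> (a', b) \in D -> a = a'.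
  rewrite !inE => /(nthP (a, b)) [i lti Ei] /(nthP (a, b)) [j ltj Ej].
  move: Ei Ej; rewrite !nth_zip ?sz1 ?sz2 // => -[Ea Eb] [Ea' Eb'].
  rewrite size_zip sz1 sz2 minnn in lti ltj.
  have : i == j by rewrite -(nth_uniq b (s:=s2)) ?sz2 // Eb Eb'.
  by move/eqP => Eij; rewrite -Ea -Ea' Eij.
set Y := setX X1 X2 :|: D.
have HY : #|Y| = #|X1| * #|X2| + m.
  rewrite cardsU cardsX HD.
  have -> : setX X1 X2 :&: D = set0.
    apply/setP => -[x y]; rewrite in_setI in_set0 in_setX.
    by apply/negP => /andP[/andP[h1 h2] /Dmem]; rewrite !inE h1.
  by rewrite cards0 subn0.
rewrite -HY; apply: phi_ge.
apply/forallP => S; apply/implyP => sub; apply/negP => /andP[ne /forallP all].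
have SX : S \subset setX X1 X2.
  apply/subsetP => -[a b] Hab.
  have := subsetP sub _ Hab; rewrite in_setU => /orP[//|HDab].
  exfalso.
  have r0 : deg_in e1 (prow S b) a = 0.
    apply/eqP; rewrite cards_eq0; apply/eqP/setP => x; rewrite !inE.
    apply/negP => /andP[Hx He].
    have := subsetP sub _ Hx; rewrite in_setU in_setX => /orP[/andP[_ Hb]|Hx'].
      by move: (Dmem _ _ HDab); rewrite !inE Hb andbF.
    by move: He; rewrite (Dfun2 _ _ _ Hx' HDab) irr1.
  have c0 : deg_in e2 (pcol S a) b = 0.
    apply/eqP; rewrite cards_eq0; apply/eqP/setP => x; rewrite !inE.
    apply/negP => /andP[Hx He].
    have := subsetP sub _ Hx; rewrite in_setU in_setX => /orP[/andP[Ha _]|Hx'].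
      by move: (Dmem _ _ HDab); rewrite !inE Ha.
    by move: He; rewrite (Dfun1 _ _ _ Hx' HDab) irr2.
  have := all (a, b); rewrite Hab /= !deg_in_cart // prowC pcolC r0 c0.
  have := deg_inC e1 (prow S b) a; have := deg_inC e2 (pcol S a) b.
  have := mindeg_le e1 a; have := mindeg_le e2 b.
  rewrite r0 c0; lia.
set P1 := [set u.1 | u in S].
have P1sub : P1 \subset X1.
  apply/subsetP => x /imsetP [[a b] Hu ->].
  by have := subsetP SX _ Hu; rewrite in_setX => /andP[].
have P1ne : P1 != set0.
  case/set0Pn: ne => u Hu; apply/set0Pn; exists u.1; exact: imset_f.
move/forallP: HX1 => /(_ P1); rewrite P1sub /= /def_alliance P1ne /=.
move=> /forallPn [a0]; rewrite negb_imply => /andP[Ha0 Hbad].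
rewrite -ltNge in Hbad.
case/imsetP: Ha0 => -[a b] Hab /= Ea0; subst a0.
have Csub : pcol S a \subset X2.
  apply/subsetP => y; rewrite inE => Hy.
  by have := subsetP SX _ Hy; rewrite in_setX => /andP[].
move/forallP: HX2 => /(_ (pcol S a)); rewrite Csub /= => /negP; apply.
apply/andP; split.
  by apply/set0Pn; exists b; rewrite inE.
apply/forallP => b'; apply/implyP; rewrite inE => Hb'.
have := all (a, b'); rewrite Hb' /= !deg_in_cart // prowC pcolC.
have := deg_inC e1 (prow S b') a; have := deg_inC e1 P1 a.
have : deg_in e1 (prow S b') a <= deg_in e1 P1 a.
  apply: deg_in_mono; apply/subsetP => x; rewrite inE => Hx.
  by apply/imsetP; exists (x, b').
move: Hbad; lia.
Qed.
End P2.

Theorem corollary1 (T1 T2 : finType) (e1 : rel T1) (e2 : rel T2)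
  (sym1 : symmetric e1) (irr1 : irreflexive e1)
  (sym2 : symmetric e2) (irr2 : irreflexive e2) :
  (* (i), case i = 1, j = 2 *)
  (forall k : int,
     ((maxdeg e2)%:Z - (maxdeg e1)%:Z <= k)%R ->
     (k <= (maxdeg e1)%:Z + (maxdeg e2)%:Z)%R ->
     #|T2| * phi_d e1 (k - (maxdeg e2)%:Z)%R <= phi_d (cart e1 e2) k) /\
  (* (i), case i = 2, j = 1 *)
  (forall k : int,
     ((maxdeg e1)%:Z - (maxdeg e2)%:Z <= k)%R ->
     (k <= (maxdeg e2)%:Z + (maxdeg e1)%:Z)%R ->
     #|T1| * phi_d e2 (k - (maxdeg e1)%:Z)%R <= phi_d (cart e1 e2) k) /\
  (* (ii) *)
  (forall k1 k2 : int,
     (1 - (mindeg e1)%:Z <= k1)%R -> (k1 <= (maxdeg e1)%:Z)%R ->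
     (1 - (mindeg e2)%:Z <= k2)%R -> (k2 <= (maxdeg e2)%:Z)%R ->
     phi_d e1 k1 * phi_d e2 k2
       + minn (#|T1| - phi_d e1 k1) (#|T2| - phi_d e2 k2)
     <= phi_d (cart e1 e2) (k1 + k2 - 1)%R).
Proof.
split; [|split].
- by move=> k _ _; apply: part_i_row.
- by move=> k _ _; apply: part_i_col.
- by move=> k1 k2 h1 _ h2 _; apply: part_ii.
Qed.
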